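(* Let $\lambda$ be a nonzero real number and let $n,r$ be positive integers. Then $$H_{n,\lambda}^{(r)}=\frac{1}{n!}\sum_{k=1}^{n}(-1)^{n-k}\langle r\rangle_{k-1,\lambda}\,k\,S_{1,\lambda}(n,k).$$ In particular, for $r=1$, $$H_{n,\lambda}=\frac{1}{n!}\sum_{k=1}^{n}(-1)^{n-k}k\,\langle 1\rangle_{k-1,\lambda}S_{1,\lambda}(n,k).$$
   Context: For real $x$ and integer $k\ge0$: $(x)_{0,\lambda}=1$, $(x)_{k,\lambda}=x(x-\lambda)\cdots(x-(k-1)\lambda)$; $\langle x\rangle_{0,\lambda}=1$, $\langle x\rangle_{k,\lambda}=x(x+\lambda)\cdots(x+(k-1)\lambda)$; $(x)_0=1$, $(x)_k=x(x-1)\cdots(x-k+1)$. The degenerate Stirling numbers of the first kind $S_{1,\lambda}(n,k)$ are defined by $(x)_{n}=\sum_{k=0}^{n}S_{1,\lambda}(n,k)(x)_{k,\lambda}$ for $n\ge 0$; equivalently $\frac{1}{k!}(\log_\lambda(1+t))^k=\sum_{n\ge k}S_{1,\lambda}(n,k)\frac{t^n}{n!}$ with $\log_\lambda(1+t)=\sum_{k\ge1}\lambda^{k-1}(1)_{k,1/\lambda}t^k/k!=((1+t)^\lambda-1)/\lambda$. The degenerate harmonic numbers are $H_{0,\lambda}=0$, $H_{n,\lambda}=\sum_{k=1}^{n}\frac{1}{\lambda}\binom{\lambda}{k}(-1)^{k-1}$ for $n\ge1$; the degenerate hyperharmonic numbers are $H_{n,\lambda}^{(1)}=H_{n,\lambda}$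 and $H_{n,\lambda}^{(r)}=\sum_{k=1}^{n}H_{k,\lambda}^{(r-1)}$ for $r\ge2$. *)

(* Defs.v *)
From mathcomp Require Import all_boot all_order all_algebra.
Set Implicit Arguments. Unset Strict Implicit. Unset Printing Implicit Defensive.
Import Order.TTheory GRing.Theory Num.Theory.
Local Open Scope ring_scope.

Section Defs.
Variable R : realFieldType.

Definition dfall (lam x : R) (k : nat) : R := \prod_(i < k) (x - i%:R * lam).
Definition drise (lam x : R) (k : nat) : R := \prod_(i < k) (x + i%:R * lam).
Definition ffall (x : R) (k : nat) : R := \prod_(i < k) (x - i%:R).

Definition gbinom (x : R) (k : nat) : R := ffall x k / (k`!)%:R.

Definition dharm (lam : R) (n : nat) : R :=
  \sum_(1 <= k < n.+1) lam^-1 * gbinom lam k * (-1) ^+ k.-1.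

(* degenerate hyperharmonic numbers H^{(r)}_{n,lam} for r >= 1;
   dhyper lam r n with r = 0 is (irrelevantly) set equal to H_{n,lam}. *)
Fixpoint dhyper (lam : R) (r n : nat) {struct r} : R :=
  match r with
  | 0 => dharm lam n
  | r'.+1 =>
      match r' with
      | 0 => dharm lam n
      | _ => \sum_(1 <= k < n.+1) dhyper lam r' k
      end
  end.

Definition is_deg_stirling1 (lam : R) (S : nat -> nat -> R) : Prop :=
  forall (n : nat) (x : R), ffall x n = \sum_(k < n.+1) S n k * dfall lam x k.

End Defs.

(* Main.v *)
Require Import Defs.
From mathcomp Require Import all_boot all_order all_algebra ring.
Import Order.TTheory GRing.Theory Num.Theory.
Local Open Scope ring_scope.

Section Aux.
Variable R : realFieldType.
Implicit Types (lam x a : R).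

Lemma drise_recr lam x k : drise lam x k.+1 = drise lam x k * (x + k%:R * lam).
Proof. by rewrite /drise big_ord_recr. Qed.

Lemma drise_recl lam x k : drise lam x k.+1 = x * drise lam (x + lam) k.
Proof.
rewrite /drise big_ord_recl /= mul0r addr0; congr (_ * _).
apply: eq_bigr => i _; rewrite /= /bump /= add1n -natr1; ring.
Qed.

Lemma dfall_recr lam x k : dfall lam x k.+1 = dfall lam x k * (x - k%:R * lam).
Proof. by rewrite /dfall big_ord_recr. Qed.

Lemma ffall_recr x k : ffall x k.+1 = ffall x k * (x - k%:R).
Proof. by rewrite /ffall big_ord_recr. Qed.

Lemma ffall_recl x k : ffall x k.+1 = x * ffall (x - 1) k.
Proof.
rewrite /ffall big_ord_recl /= subr0; congr (_ * _).
apply: eq_bigr => i _; rewrite /= /bump /= add1n -natr1; ring.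
Qed.

Lemma dfallN lam x k : dfall lam (- x) k = (-1) ^+ k * drise lam x k.
Proof.
elim: k => [|k IH]; first by rewrite /dfall /drise !big_ord0 expr0 mul1r.
rewrite dfall_recr drise_recr IH exprS; ring.
Qed.

Lemma ffallN x k : ffall (- x) k = (-1) ^+ k * drise 1 x k.
Proof.
elim: k => [|k IH]; first by rewrite /ffall /drise !big_ord0 expr0 mul1r.
rewrite ffall_recr drise_recr IH exprS; ring.
Qed.

Lemma sign_sq n : (-1) ^+ n * (-1) ^+ n = 1 :> R.
Proof. by rewrite -exprD addnn -mul2n exprM sqrrN expr1n expr1n. Qed.

Lemma sign_sub n k : (k <= n)%N -> (-1) ^+ (n - k) = (-1) ^+ n * (-1) ^+ k :> R.
Proof.
move=> hk; have -> : (-1) ^+ n = (-1) ^+ (n - k) * (-1) ^+ k :> R.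
  by rewrite -exprD subnK.
by rewrite -mulrA sign_sq mulr1.
Qed.

Definition G a n : R := drise 1 a n / (n`!)%:R.

Lemma fact_neq0 n : (n`!)%:R != 0 :> R.
Proof. by rewrite pnatr_eq0 -lt0n fact_gt0. Qed.

Lemma Sn_neq0 n : (n.+1)%:R != 0 :> R.
Proof. by rewrite pnatr_eq0. Qed.

Lemma G_step a n : G (a + 1) n.+1 = G (a + 1) n + G a n.+1.
Proof.
rewrite /G drise_recr [drise 1 a _]drise_recl factS natrM -natr1.
have h1 := fact_neq0 n; have h2 := Sn_neq0 n; rewrite -natr1 in h2.
field; by rewrite h1 h2.
Qed.

Lemma G_sum a n : \sum_(1 <= k < n.+1) G a k = G (a + 1) n - 1.
Proof.
elim: n => [|n IH].
  by rewrite big_geq // /G /drise big_ord0 fact0 div1r invr1 subrr.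
by rewrite big_nat_recr //= IH G_step; ring.
Qed.

Lemma drise_one n : drise 1 1 n = (n`!)%:R :> R.
Proof.
elim: n => [|n IH]; first by rewrite /drise big_ord0 fact0.
by rewrite drise_recr IH factS natrM mulr1 addrC natr1 mulrC.
Qed.

Lemma dharm_closed lam n : lam != 0 ->
  dharm lam n = lam^-1 * (G 1 n - G (1 - lam) n).
Proof.
move=> hl; rewrite /dharm.
elim: n => [|n IH].
  by rewrite big_geq // /G /drise !big_ord0 fact0 divr1 subrr mulr0.
rewrite big_nat_recr //= IH /gbinom ffall_recl.
have -> : lam - 1 = - (1 - lam) by ring.
rewrite ffallN /G !drise_one drise_recr factS natrM.
have h1 := fact_neq0 n; have h2 := Sn_neq0 n; rewrite -natr1 in h2 *.
have hs := sign_sq n.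
set s := (-1) ^+ n; set D := drise 1 (1 - lam) n.
have -> : lam^-1 * (lam * (s * D) / ((n%:R + 1) * n`!%:R)) * s
   = (lam^-1 * lam) * (s * s) * (D / ((n%:R + 1) * n`!%:R)) by ring.
rewrite mulVf // hs mul1r mul1r.
field; by rewrite h1 h2 hl.
Qed.

Lemma dhyper_closed lam r n : lam != 0 -> (0 < r)%N ->
  dhyper lam r n = lam^-1 * (G r%:R n - G (r%:R - lam) n).
Proof.
move=> hl; elim: r n => [//|r IH] n _.
case: r IH => [|r] IH; first by rewrite /= dharm_closed.
have -> : dhyper lam r.+2 n = \sum_(1 <= k < n.+1) dhyper lam r.+1 k by [].
rewrite (eq_big_nat _ _ (F2 := fun k => lam^-1 * (G r.+1%:R k - G (r.+1%:R - lam) k)));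
  last by move=> i _; rewrite IH.
rewrite -mulr_sumr sumrB !G_sum.
have -> : r.+2%:R = r.+1%:R + 1 :> R by rewrite natr1.
have -> : r.+1%:R + 1 - lam = r.+1%:R - lam + 1 :> R by ring.
ring.
Qed.

Lemma rhs_closed lam (S : nat -> nat -> R) a n : lam != 0 -> is_deg_stirling1 lam S ->
  \sum_(1 <= k < n.+1) (-1) ^+ (n - k) * drise lam a k.-1 * k%:R * S n k
  = lam^-1 * (drise 1 a n - drise 1 (a - lam) n).
Proof.
move=> hl hS.
have E : ffall (- a) n - ffall (- (a - lam)) n =
   \sum_(0 <= k < n.+1) (S n k * dfall lam (- a) k - S n k * dfall lam (- (a - lam)) k).
  by rewrite sumrB !big_mkord !hS.
rewrite !ffallN in E.
have -> : drise 1 a n - drise 1 (a - lam) n =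
   (-1) ^+ n * ((-1) ^+ n * drise 1 a n - (-1) ^+ n * drise 1 (a - lam) n).
  by rewrite mulrBr !mulrA sign_sq !mul1r.
have d0 : forall x, dfall lam x 0 = 1 by move=> x; rewrite /dfall big_ord0.
rewrite E mulr_sumr mulr_sumr [RHS]big_ltn // /= !d0 subrr !mulr0 add0r.
apply: eq_big_nat => k /andP [hk1 hkn].
rewrite ltnS in hkn; rewrite (sign_sub _ _ hkn) !dfallN.
case: k hk1 hkn => [//|k] _ _ /=.
rewrite drise_recr [drise lam (a - lam) _]drise_recl subrK -natr1.
field; by rewrite hl.
Qed.

End Aux.

Theorem theorem3 (R : realFieldType) (lam : R) (S1 : nat -> nat -> R) :
  lam != 0 -> is_deg_stirling1 lam S1 ->
  (forall n r : nat, (0 < n)%N -> (0 < r)%N ->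
     dhyper lam r n =
       (n`!%:R)^-1 * \sum_(1 <= k < n.+1)
          (-1) ^+ (n - k) * drise lam r%:R k.-1 * k%:R * S1 n k)
  /\
  (forall n : nat, (0 < n)%N ->
     dharm lam n =
       (n`!%:R)^-1 * \sum_(1 <= k < n.+1)
          (-1) ^+ (n - k) * k%:R * drise lam 1 k.-1 * S1 n k).
Proof.
move=> hl hS.
have main : forall n r : nat, (0 < n)%N -> (0 < r)%N ->
     dhyper lam r n =
       (n`!%:R)^-1 * \sum_(1 <= k < n.+1)
          (-1) ^+ (n - k) * drise lam r%:R k.-1 * k%:R * S1 n k.
  move=> n r _ hr; rewrite dhyper_closed // rhs_closed // /G.
  by ring.
split=> // n hn.
have -> : dharm lam n = dhyper lam 1 n by [].
rewrite (main n 1%N hn isT); congr (_ * _); apply: eq_bigr => k _; ring.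
Qed.
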